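(* Let $V$ be a finite nonempty set and $f:\{0,1\}^V\to\{0,1\}^V$ an and-net, and let $C$ be a signed digraph. Then $f$ has a circular subnetwork whose interaction graph is $C$ if and only if $C$ is a cycle of $G(f)$ that has no chord and no delocalizing vertex in $G(f)$.
   Context: For nonempty $I\subseteq V$ and $z\in\{0,1\}^{V\setminus I}$, the subnetwork of $f$ induced by $z$ is $h:\{0,1\}^I\to\{0,1\}^I$ with $h(x|_I)=f(x)|_I$ for all $x$ whose restriction to $V\setminus I$ is $z$. For a network $g$ on $W$ and $x^{j\alpha}$ the point equal to $x$ except its $j$-component is $\alpha$, the (global) interaction graph $G(g)$ is the signed digraph on $W$ with a positive (resp. negative) arc from $j$ to $i$ iff $g_i(x^{j1})-g_i(x^{j0})=1$ (resp. $=-1$) for at least one $x$. $f$ is an and-net if $G(f)$ has at most one arc from $j$ to $i$ for all $i,j$ and for every $i$ and $x$: $f_i(x)=1$ iff $G(f)$ has no positive arc $j\to i$ with $x_j=0$ and no negative arc $j\to i$ with $x_j=1$. A cycle is a subgraph with at most one arc between any ordered pair whose underlying unsigned digraph is a directed cycle; positive (negative) if it has an even (odd) number of negative arcs. $g$ is circular if $G(g)$ itself is a cycle through all vertices of $W$. A cycle $C$ of $G$ has no chord if its underlying unsigned digraph is an induced subgraph of the underlying unsigned digraph of $G$. A vertex $v$ (possibly on $C$) is a delocalizing vertex of $C$ in $G$ if $G$ has a positive arc from $v$ to a vertex of $C$ and a negative arc from $v$ to a different vertex of $C$. *)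

(* Defs.v *)
From mathcomp Require Import all_boot.
Set Implicit Arguments. Unset Strict Implicit. Unset Printing Implicit Defensive.

Definition config (W : finType) := {ffun W -> bool}.
Definition network (W : finType) := config W -> config W.

Definition flip (W : finType) (x : config W) (j : W) (b : bool) : config W :=
  [ffun k => if k == j then b else x k].

(* A signed digraph on (a subset of) W is a pair (I, A) with I : {set W} the
   vertex set and A : {set W * W * bool} the arcs; ((j, i), true) is a positive
   arc j -> i and ((j, i), false) a negative arc j -> i. *)
Definition sdigraph_wf (W : finType) (I : {set W}) (A : {set W * W * bool}) :=
  forall j i b, ((j, i), b) \in A -> (j \in I) && (i \in I).

Definition igraph (W : finType) (g : network W) : {set W * W * bool} :=
  [set a : W * W * bool |
     let: ((j, i), s) := a in
     [exists x : config W,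
        if s then g (flip x j true) i && ~~ g (flip x j false) i
        else ~~ g (flip x j true) i && g (flip x j false) i]].

Definition simple_arcs (W : finType) (A : {set W * W * bool}) :=
  forall j i, ~ ((((j, i), true) \in A) /\ (((j, i), false) \in A)).

Definition and_net (V : finType) (f : network V) :=
  simple_arcs (igraph f) /\
  forall (i : V) (x : config V),
    f x i = [forall j, ~~ ((((j, i), true) \in igraph f) && ~~ x j)
                      && ~~ ((((j, i), false) \in igraph f) && x j)].

(* The underlying unsigned digraph of (I, A) is a directed cycle
   (a loop when the cycle has length one). *)
Definition directed_cycle (W : finType) (I : {set W}) (A : {set W * W * bool}) :=
  exists s : seq W, [/\ s != [::], uniq s, I = [set v in s] &
    forall j i, (exists b, ((j, i), b) \in A) <-> (j \in s /\ i = next s j)].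

Definition is_cycle (W : finType) (I : {set W}) (A : {set W * W * bool}) :=
  simple_arcs A /\ directed_cycle I A.

Definition cycle_of (W : finType) (G : {set W * W * bool})
    (I : {set W}) (A : {set W * W * bool}) :=
  A \subset G /\ is_cycle I A.

Definition no_chord (W : finType) (G : {set W * W * bool})
    (I : {set W}) (A : {set W * W * bool}) :=
  forall j i, j \in I -> i \in I ->
    (exists b, ((j, i), b) \in G) -> (exists b, ((j, i), b) \in A).

Definition delocalizing (W : finType) (G : {set W * W * bool})
    (I : {set W}) (v : W) :=
  exists u w, [/\ u \in I, w \in I, u != w,
                  ((v, u), true) \in G & ((v, w), false) \in G].

(* Subnetworks.  The subnetwork index set is the subtype of I; z is a
   configuration on V of which only the restriction to V \ I is used. *)
Definition subT (V : finType) (I : {set V}) := {v : V | v \in I}.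

Definition extend (V : finType) (I : {set V}) (y : config (subT I))
    (z : config V) : config V :=
  [ffun v => if insub v is Some i then y i else z v].

Definition subnetwork (V : finType) (f : network V) (I : {set V}) (z : config V)
    : network (subT I) :=
  fun y => [ffun i : subT I => f (extend y z) (val i)].

Definition circular (W : finType) (g : network W) :=
  is_cycle [set: W] (igraph g).

Definition arcs_in (V : finType) (I : {set V}) (A : {set subT I * subT I * bool})
    : {set V * V * bool} :=
  [set ((val a.1.1, val a.1.2), a.2) | a in A].

Arguments subnetwork {V} f I z _.

(* Main.v *)
Require Import Defs.
From mathcomp Require Import all_boot.

Section S.
Variables (V : finType) (f : network V).
Hypothesis Hsimp : simple_arcs (igraph f).
Hypothesis Hf : forall (i : V) (x : config V),
    f x i = [forall j, ~~ ((((j, i), true) \in igraph f) && ~~ x j)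
                      && ~~ ((((j, i), false) \in igraph f) && x j)].

Let N := igraph f.

Definition lit (i v : V) (b : bool) :=
  if b then ((v, i), false) \notin N else ((v, i), true) \notin N.

Lemma HfE i x : f x i = [forall v, lit i v (x v)].
Proof.
rewrite Hf; apply/forallP/forallP => H v; have := H v; rewrite /lit; case: (x v);
  rewrite ?andbT ?andbF //= ?andbT; by [].
Qed.

Lemma simpl1 j i : ((j, i), true) \in N -> (((j, i), false) \in N) = false.
Proof. by move=> H; apply/negP => H'; exact: (Hsimp j i (conj H H')). Qed.

Variables (I : {set V}) (z : config V).
Let h := subnetwork f I z.

Definition ok (i : V) := [forall v, (v \notin I) ==> lit i v (z v)].

Lemma extend_flip (y : config (subT I)) (j : subT I) b :
  extend (flip y j b) z = flip (extend y z) (val j) b.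
Proof.
apply/ffunP => v; rewrite !ffunE; case: insubP => [k kI <-|nI].
  by rewrite ffunE (inj_eq val_inj).
have -> : (v == val j) = false.
  by apply/negP => /eqP E; move: nI; rewrite E (valP j).
by [].
Qed.

Lemma extend_out (y : config (subT I)) v : v \notin I -> extend y z v = z v.
Proof. by move=> nI; rewrite ffunE; case: insubP => [k kI _|//]; rewrite kI in nI. Qed.

Lemma hE y i : h y i = [forall v, lit (val i) v (extend y z v)].
Proof. by rewrite /h /subnetwork ffunE HfE. Qed.

Lemma flipE (x : config V) j b v : flip x j b v = if v == j then b else x v.
Proof. by rewrite ffunE. Qed.

Lemma keyA (j i : subT I) b :
  (((j, i), b) \in igraph h) = (((val j, val i), b) \in N) && ok (val i).
Proof.
rewrite inE; apply/idP/idP.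
- case/existsP => y.
  have Hx : forall c, h (flip y j c) i = [forall v, lit (val i) v (flip (extend y z) (val j) c v)].
    by move=> c; rewrite hE extend_flip.
  rewrite !Hx.
  have okP : forall c, [forall v, lit (val i) v (flip (extend y z) (val j) c v)] -> ok (val i).
    move=> c /forallP H; apply/forallP => v; apply/implyP => nv.
    have := H v; rewrite flipE.
    have -> : (v == val j) = false by apply/negP => /eqP E; move: nv; rewrite E (valP j).
    by rewrite extend_out.
  have wit : forall c, [forall v, lit (val i) v (flip (extend y z) (val j) c v)] ->
     ~~ [forall v, lit (val i) v (flip (extend y z) (val j) (~~ c) v)] ->
     ~~ lit (val i) (val j) (~~ c).
    move=> c /forallP H1 /forallP H2; apply/negP => Hl; apply: H2 => v.
    have := H1 v; rewrite !flipE; case: eqP => [->//|//].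
  case: b => /andP [H1 H2].
  + have := wit true H1 H2; rewrite /lit /= negbK => ->.
    exact: okP H1.
  + have := wit false H2; rewrite negbK => /(_ H1); rewrite /lit /=; case: (_ \in _) => //= _.
    exact: okP H2.
- case/andP => Harc /forallP Hok.
  apply/existsP; exists [ffun k : subT I => ((val k, val i), true) \in N].
  rewrite !hE !extend_flip.
  have gen : forall c, (forall v, lit (val i) v (flip (extend [ffun k : subT I => ((val k, val i), true) \in N] z) (val j) c v)) <-> lit (val i) (val j) c.
    move=> c; split; first by move=> H; have := H (val j); rewrite flipE eqxx.
    move=> Hc v; rewrite flipE; case: eqP => [->//|_].
    rewrite ffunE; case: insubP => [k kI <-|nI].
      rewrite ffunE /lit; case E: (_ \in N) => //=.
      by rewrite simpl1.
    by have := Hok v; rewrite nI.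
  have gen' : forall c, [forall v, lit (val i) v (flip (extend [ffun k : subT I => ((val k, val i), true) \in N] z) (val j) c v)] = lit (val i) (val j) c.
    by move=> c; apply/forallP/idP => /gen.
  rewrite !gen' /lit /=.
  case: b Harc => Harc /=; first by rewrite simpl1 // Harc.
  rewrite Harc /=; apply/negP => Ht; by rewrite simpl1 in Harc.
Qed.


Definition Rr := [set a in N | (a.1.1 \in I) && (a.1.2 \in I)].

Lemma arcs_R : (forall i, i \in I -> ok i) -> arcs_in (igraph h) = Rr.
Proof.
move=> Hok; apply/setP => a; rewrite inE; apply/imsetP/idP.
- case=> [[[j' i'] b]] Hin ->; rewrite keyA in Hin; case/andP: Hin => H _.
  by rewrite /= H (valP j') (valP i').
- case: a => [[j i] b] /= /andP [H /andP [jI iI]].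
  exists ((Sub j jI, Sub i iI), b) => //.
  by rewrite keyA /= H Hok.
Qed.

Lemma fwd_ok : circular h -> forall i, i \in I -> ok i.
Proof.
case=> _ [s' [sn us setTs Harc]] i iI.
pose i' : subT I := Sub i iI.
have : exists b, ((prev s' i', i'), b) \in igraph h.
  apply/Harc; split.
    rewrite mem_prev; have : i' \in [set: subT I] by rewrite inE.
    by rewrite setTs inE.
  by rewrite next_prev.
by case=> b; rewrite keyA => /andP [_].
Qed.

End S.
Arguments Rr {V}. Arguments ok {V}.

Theorem proposition9 (V : finType) (f : network V)
    (CI : {set V}) (CA : {set V * V * bool}) :
  0 < #|V| -> and_net f -> sdigraph_wf CI CA ->
  (exists z : config V,
      [/\ CI != set0, circular (subnetwork f CI z)
        & CA = arcs_in (igraph (subnetwork f CI z))])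
  <->
  [/\ cycle_of (igraph f) CI CA, no_chord (igraph f) CI CA
    & ~ (exists v : V, delocalizing (igraph f) CI v)].
Proof.
move=> _ [Hsimp Hf] Hwf.
split.
- case=> z [CIn Hcirc ->].
  have Hok := @fwd_ok V f Hsimp Hf CI z Hcirc.
  rewrite (@arcs_R V f Hsimp Hf CI z Hok).
  have Hcirc' := Hcirc; case: Hcirc' => _ [s' [sn us setTs Harc]].
  have HR : forall j i, (exists b, ((j, i), b) \in Rr f CI) <->
      (j \in map val s' /\ i = next (map val s') j).
    move=> j i; split.
    + case=> b; rewrite inE /= => /andP [H /andP [jI iI]].
      have : exists b, ((Sub j jI : subT CI, Sub i iI : subT CI), b)
               \in igraph (subnetwork f CI z).
        by exists b; rewrite keyA //= H Hok.
      move/Harc => [Hj Hi]; split.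
        by apply/mapP; exists (Sub j jI).
      rewrite (_ : j = val (Sub j jI : subT CI)) // next_map //; last exact: val_inj.
      by rewrite -Hi.
    + case=> /mapP [j' js' ->] ->.
      rewrite next_map //; last exact: val_inj.
      have : exists b, ((j', next s' j'), b) \in igraph (subnetwork f CI z).
        by apply/Harc.
      case=> b; rewrite keyA // => /andP [H _].
      by exists b; rewrite inE /= H (valP j') (valP (next s' j')).
  have dc : directed_cycle CI (Rr f CI).
    exists (map val s'); split => //.
    + by case: s' sn {setTs Harc HR us}.
    + by rewrite map_inj_uniq //; exact: val_inj.
    + apply/setP => v; rewrite inE; apply/idP/idP.
        move=> vI; apply/mapP; exists (Sub v vI) => //.
        have : (Sub v vI : subT CI) \in [set: subT CI] by rewrite inE.
        by rewrite setTs inE.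
      by case/mapP => v' _ ->; exact: valP.
  split.
  + split; first by apply/subsetP => a; rewrite inE => /andP [].
    split => //.
    move=> j i [/setIdP [H1 _] /setIdP [H2 _]]; exact: (Hsimp j i (conj H1 H2)).
  + by move=> j i jI iI [b H]; exists b; rewrite inE /= H jI iI.
  + case=> v [u [w [uI wI uw Hu Hw]]].
    case vI: (v \in CI).
    * have [_ U] : v \in map val s' /\ u = next (map val s') v.
        by apply/HR; exists true; apply/setIdP; rewrite /= vI uI.
      have [_ W] : v \in map val s' /\ w = next (map val s') v.
        by apply/HR; exists false; apply/setIdP; rewrite /= vI wI.
      by move: uw; rewrite U W eqxx.
    * have /forallP /(_ v) := Hok u uI; rewrite vI /=.
      have /forallP /(_ v) := Hok w wI; rewrite vI /= /lit.
      by case: (z v); rewrite ?Hu ?Hw.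
- case=> [[sub [Hs [s [sn us CIs Harc]]]] nch ndl].
  pose z : config V := [ffun v => [exists u in CI, ((v, u), true) \in igraph f]].
  exists z.
  have Hok : forall i, i \in CI -> ok f CI z i.
    move=> i iI; apply/forallP => v; apply/implyP => nv.
    rewrite /lit ffunE; case E: [exists u in CI, _].
    - case/existsP: E => u /andP [uI Hu]; apply/negP => Hn.
      case: (eqVneq u i) => [eui|nui].
        by subst u; rewrite simpl1 in Hn.
      by apply: ndl; exists v, u, i; split.
    - apply/negP => Hp; move/negbT: E => /existsPn /(_ i).
      by rewrite iI Hp.
  have CAR : CA = Rr f CI.
    apply/setP => [[[j i] b]]; rewrite inE /=; apply/idP/idP.
    + move=> H; have := Hwf _ _ _ H => /andP [jI iI].
      by rewrite (subsetP sub _ H) jI iI.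
    + case/andP => H /andP [jI iI].
      have [b' H'] := nch j i jI iI (ex_intro _ b H).
      have H'' := subsetP sub _ H'.
      case: b b' H H' H'' => [] [] // H H' H''.
      * by case: (Hsimp j i (conj H H'')).
      * by case: (Hsimp j i (conj H'' H)).
  split.
  + case: s sn CIs {us Harc} => // a s0 _ ->; apply/set0Pn; exists a.
    by rewrite inE mem_head.
  + split.
      move=> j' i' [H1 H2]; rewrite !keyA // in H1 H2.
      apply: (Hsimp (val j') (val i')); split.
        by case/andP: H1.
      by case/andP: H2.
    pose s' := pmap (insub : V -> option (subT CI)) s.
    have ms : map val s' = s.
      rewrite (pmap_filter (@insubK _ _ _)); apply/all_filterP/allP => x xs.
      have xI : x \in CI by rewrite CIs inE.
      by rewrite /=; case: insubP => //; rewrite xI.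
    have us' : uniq s' by exact: pmap_sub_uniq.
    exists s'; split => //.
    * by move: sn; rewrite -ms; case: (s').
    * apply/setP => v'; rewrite !inE mem_pmap_sub.
      have CIs' : forall v, (v \in CI) = (v \in s) by move=> v; rewrite CIs inE.
      by rewrite -CIs' (valP v').
    * move=> j' i'; split.
      - case=> b; rewrite keyA // => /andP [H _].
        have : exists b, ((val j', val i'), b) \in CA.
          by exists b; rewrite CAR inE /= H (valP j') (valP i').
        move/Harc => [Hj Hi]; split; first by rewrite mem_pmap_sub.
        apply: val_inj; rewrite -(next_map val_inj us') ms; exact: Hi.
      - case=> Hj Hi.
        have : val j' \in s /\ val i' = next s (val j').
          split; first by rewrite -mem_pmap_sub.
          by rewrite Hi -{1}ms next_map //; exact: val_inj.
        move/Harc => [b]; rewrite CAR inE /= => /andP [H _].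
        by exists b; rewrite keyA // H Hok //; exact: valP.
  + by rewrite arcs_R // CAR.
Qed.
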